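(* Let $W\subset T(\mathbf E)^\vee$ be the $\mathbb Q$-span of $\mathbf e_{10}^\vee\mathbf e_4^\vee$, $\mathbf e_4^\vee\mathbf e_{10}^\vee$, $\mathbf e_8^\vee\mathbf e_6^\vee$, $\mathbf e_6^\vee\mathbf e_8^\vee$. Then \[ \iota(U(\mathfrak u)^\vee)\cap W\subseteq\mathrm{span}_{\mathbb Q}\{\mathbf e_{10}^\vee\,ш\,\mathbf e_4^\vee,\ \mathbf e_8^\vee\,ш\,\mathbf e_6^\vee,\ 3\mathbf e_{10}^\vee\mathbf e_4^\vee+\mathbf e_8^\vee\mathbf e_6^\vee\}, \] where $ш$ denotes the shuffle product (so $\mathbf e_a^\vee ш\mathbf e_b^\vee=\mathbf e_a^\vee\mathbf e_b^\vee+\mathbf e_b^\vee\mathbf e_a^\vee$).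
   Context: $\mathbf E=\{\mathbf e_0,\mathbf e_2,\mathbf e_4,\ldots\}$; $T(\mathbf E)$ is the free associative (tensor) $\mathbb Q$-algebra on $\mathbf E$, graded with each $\mathbf e_{2k}$ of degree one, and $T(\mathbf E)^\vee$ is its graded dual, with basis the dual words $\mathbf e^\vee_{2k_1}\cdots\mathbf e^\vee_{2k_n}$ and product the shuffle product. Let $\mathcal L$ be the free Lie algebra on $\{x,y\}$, and for $k\ge0$ let $\varepsilon_{2k}$ be the derivation of $\mathcal L$ with $\varepsilon_{2k}(x)=\mathrm{ad}^{2k}(x)(y)$ and $\varepsilon_{2k}(y)=\sum_{0\le j<k}(-1)^j[\mathrm{ad}^j(x)(y),\mathrm{ad}^{2k-1-j}(x)(y)]$. Let $\mathfrak u$ be the Lie algebra of derivations generated by the $\varepsilon_{2k}$, $U(\mathfrak u)$ its universal enveloping algebra (graded, $\varepsilon_{2k}$ of degree one), and $\iota:U(\mathfrak u)^\vee\hookrightarrow T(\mathbf E)^\vee$ the graded dual of the surjection $T(\mathbf E)\to U(\mathfrak u)$, $\mathbf e_{2k}\mapsto\varepsilon_{2k}$. (Known input: in $\mathfrak u$ one has $[\varepsilon_{10},\varepsilon_4]-3[\varepsilon_8,\varepsilon_6]=0$.) *)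

(* Defs.v *)
From HB Require Import structures.
From mathcomp Require Import all_boot all_order all_algebra.
Set Implicit Arguments. Unset Strict Implicit. Unset Printing Implicit Defensive.
Import Order.TTheory GRing.Theory Num.Theory.
Local Open Scope ring_scope.

(* ---------- Noncommutative polynomials (free associative Q-algebras) ------
   An element of the free associative Q-algebra on an alphabet A is given by a
   finite formal linear combination of words (a list of (coefficient, word));
   two such lists denote the same element iff all coefficients agree. *)
Definition ncpoly (A : Type) := seq (rat * seq A).

Definition nccoef (A : eqType) (p : ncpoly A) (w : seq A) : rat :=
  \sum_(m <- p | m.2 == w) m.1.
Definition nceq (A : eqType) (p q : ncpoly A) : Prop :=
  forall w, nccoef p w = nccoef q w.

Definition ncadd A (p q : ncpoly A) : ncpoly A := p ++ q.
Definition ncscale A (c : rat) (p : ncpoly A) : ncpoly A :=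
  [seq (c * m.1, m.2) | m <- p].
Definition ncmul A (p q : ncpoly A) : ncpoly A :=
  [seq (m.1 * n.1, m.2 ++ n.2) | m <- p, n <- q].
Definition ncsub A (p q : ncpoly A) : ncpoly A := ncadd p (ncscale (-1) q).
Definition ncword A (w : seq A) : ncpoly A := [:: (1, w)].
Definition nclet A (a : A) : ncpoly A := ncword [:: a].
Definition ncbr A (p q : ncpoly A) : ncpoly A := ncsub (ncmul p q) (ncmul q p).
Definition ncsum A (s : seq (ncpoly A)) : ncpoly A := flatten s.

Definition lx : bool := true.
Definition ly : bool := false.
Definition X : ncpoly bool := nclet lx.
Definition Y : ncpoly bool := nclet ly.

Definition adx (p : ncpoly bool) : ncpoly bool := ncbr X p.
Definition adx_pow (n : nat) (p : ncpoly bool) : ncpoly bool := iter n adx p.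

(* The letter k stands for the generator e_{2k} of E. *)
Definition E2 (n : nat) : nat := n./2.

Definition eps_x (k : nat) : ncpoly bool := adx_pow (2 * k) Y.
Definition eps_y (k : nat) : ncpoly bool :=
  ncsum [seq ncscale ((-1) ^+ j) (ncbr (adx_pow j Y) (adx_pow (2 * k - 1 - j) Y))
        | j <- iota 0 k].
Definition eps_img (k : nat) (b : bool) : ncpoly bool :=
  if b then eps_x k else eps_y k.

(* The unique derivation of Q<x,y> with given values on the letters x, y
   (it restricts to the derivation of L with these values on x, y). *)
Fixpoint der_word (img : bool -> ncpoly bool) (w : seq bool) : ncpoly bool :=
  match w with
  | [::] => [::]
  | a :: w' => ncadd (ncmul (img a) (ncword w')) (ncmul (nclet a) (der_word img w'))
  end.
Definition der (img : bool -> ncpoly bool) (p : ncpoly bool) : ncpoly bool :=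
  ncsum [seq ncscale m.1 (der_word img m.2) | m <- p].

Definition tens := ncpoly nat.

Definition act_word (u : seq nat) (p : ncpoly bool) : ncpoly bool :=
  foldr (fun k q => der (eps_img k) q) p u.
Definition act (t : tens) (p : ncpoly bool) : ncpoly bool :=
  ncsum [seq ncscale m.1 (act_word m.2 p) | m <- t].

Inductive lieterm : Type :=
| LGen of nat
| LBr of lieterm & lieterm
| LAdd of lieterm & lieterm
| LScale of rat & lieterm.

Fixpoint lie_tens (t : lieterm) : tens :=
  match t with
  | LGen k => nclet k
  | LBr s u => ncbr (lie_tens s) (lie_tens u)
  | LAdd s u => ncadd (lie_tens s) (lie_tens u)
  | LScale c s => ncscale c (lie_tens s)
  end.

(* Lie element P of Lie(E) mapping to 0 in u (the derivation it induces on
   L vanishes, i.e. vanishes on the generators x and y). *)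
Definition lie_ker (t : lieterm) : Prop :=
  nceq (act (lie_tens t) X) [::] /\ nceq (act (lie_tens t) Y) [::].

(* Kernel of T(E) -> U(u): the two-sided ideal generated by ker(Lie(E) -> u)
   (since U(Lie(E)) = T(E) and U(g/I) = U(g)/(I)). *)
Inductive in_ker : tens -> Prop :=
| ker_gen (a b : tens) (t : lieterm) :
    lie_ker t -> in_ker (ncmul (ncmul a (lie_tens t)) b)
| ker_zero : in_ker [::]
| ker_add p q : in_ker p -> in_ker q -> in_ker (ncadd p q)
| ker_scale c p : in_ker p -> in_ker (ncscale c p)
| ker_ext p q : nceq p q -> in_ker p -> in_ker q.

Definition dual := seq nat -> rat.
Definition pairing (f : dual) (t : tens) : rat := \sum_(m <- t) m.1 * f m.2.

(* iota(U(u)^vee) = annihilator of the kernel of T(E) -> U(u) *)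
Definition in_iota_image (f : dual) : Prop :=
  forall t, in_ker t -> pairing f t = 0.

Definition dw (u : seq nat) : dual := fun w => (w == u)%:R.

Fixpoint shuffle (u v : seq nat) : seq (seq nat) :=
  let fix sh_aux (v : seq nat) : seq (seq nat) :=
    match u, v with
    | [::], _ => [:: v]
    | _, [::] => [:: u]
    | a :: u', b :: v' =>
        [seq a :: s | s <- shuffle u' v] ++ [seq b :: s | s <- sh_aux v']
    end in sh_aux v.
Definition shuffle_dual (u v : seq nat) : dual :=
  fun w => (count (pred1 w) (shuffle u v))%:R.

Definition in_W (f : dual) : Prop :=
  exists a b c d : rat, forall w,
    f w = a * dw [:: E2 10; E2 4] w + b * dw [:: E2 4; E2 10] w
        + c * dw [:: E2 8; E2 6] w + d * dw [:: E2 6; E2 8] w.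

(* Main.v *)
Require Import Defs.
From HB Require Import structures.
From mathcomp Require Import all_boot all_order all_algebra.
From mathcomp Require Import ring lra.
Import Order.TTheory GRing.Theory Num.Theory.
Local Open Scope ring_scope.
Set Implicit Arguments.

Section N.
Variable A : eqType.
Implicit Types p q : ncpoly A.
Fixpoint ins (m : rat * seq A) (l : ncpoly A) : ncpoly A :=
  match l with [::] => [:: m]
  | n :: l' => if n.2 == m.2 then (n.1 + m.1, n.2) :: l' else n :: ins m l' end.
Definition nrm (p : ncpoly A) : ncpoly A := foldr ins [::] p.

Definition Phi (g : seq A -> rat) p := \sum_(m <- p) m.1 * g m.2.

Lemma coefE p w : nccoef p w = Phi (fun v => (v == w)%:R) p.
Proof.
rewrite /nccoef /Phi big_mkcond /=; apply: eq_bigr => m _.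
by case: eqP => _; rewrite ?mulr1 ?mulr0.
Qed.

Lemma coef_cons m p w : nccoef (m :: p) w = m.1 * (m.2 == w)%:R + nccoef p w.
Proof. by rewrite !coefE /Phi big_cons. Qed.

Lemma Phi_support g s p : uniq s -> {subset map snd p <= s} ->
  Phi g p = \sum_(v <- s) nccoef p v * g v.
Proof.
move=> us; elim: p => [|m p IH] sub.
  by rewrite /Phi big_nil big1 // => v _; rewrite /nccoef big_nil mul0r.
rewrite /Phi big_cons -/(Phi g p) IH; last by move=> v hv; apply: sub; rewrite /= inE hv orbT.
have ms : m.2 \in s by apply: sub; rewrite /= inE eqxx.
rewrite [RHS](eq_bigr (fun v => m.1 * (m.2 == v)%:R * g v + nccoef p v * g v)); last by move=> v _; rewrite coef_cons mulrDl.
rewrite big_split /=; congr (_ + _).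
rewrite (bigD1_seq m.2) //= eqxx mulr1 big1 ?addr0 // => v /negbTE.
by rewrite eq_sym => ->; rewrite mulr0 mul0r.
Qed.

Lemma Phi_nceq g p q : nceq p q -> Phi g p = Phi g q.
Proof.
move=> e; set s := undup (map snd (p ++ q)).
have us : uniq s := undup_uniq _.
rewrite (@Phi_support g s p us) ?(@Phi_support g s q us).
- by apply: eq_bigr => v _; rewrite e.
- by move=> v hv; rewrite mem_undup map_cat mem_cat hv orbT.
- by move=> v hv; rewrite mem_undup map_cat mem_cat hv.
Qed.

Lemma coef_add p q w : nccoef (ncadd p q) w = nccoef p w + nccoef q w.
Proof. by rewrite /nccoef /ncadd big_cat. Qed.

Lemma coef_scale c p w : nccoef (ncscale c p) w = c * nccoef p w.
Proof. rewrite !coefE /Phi /ncscale big_map big_distrr; by apply: eq_bigr => m _; rewrite /= mulrA. Qed.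

Lemma coef_flatten (s : seq (ncpoly A)) w :
  nccoef (ncsum s) w = \sum_(p <- s) nccoef p w.
Proof. by rewrite /nccoef /ncsum big_flatten. Qed.

Lemma coef_mul p q w : nccoef (ncmul p q) w =
  Phi (fun u => Phi (fun v => (u ++ v == w)%:R) q) p.
Proof.
rewrite coefE /Phi /ncmul big_allpairs_dep; apply: eq_bigr => m _.
by rewrite big_distrr; apply: eq_bigr => n _; rewrite /= mulrA.
Qed.

Lemma ncmul_nceq p p' q q' : nceq p p' -> nceq q q' -> nceq (ncmul p q) (ncmul p' q').
Proof.
move=> e1 e2 w; rewrite !coef_mul (Phi_nceq _ e1); apply: eq_bigr => m _.
by rewrite (Phi_nceq _ e2).
Qed.

Lemma ncadd_nceq p p' q q' : nceq p p' -> nceq q q' -> nceq (ncadd p q) (ncadd p' q').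
Proof. by move=> e1 e2 w; rewrite !coef_add e1 e2. Qed.

Lemma coef_ins m l w : nccoef (ins m l) w = m.1 * (m.2 == w)%:R + nccoef l w.
Proof.
elim: l => [|n l IH] /=.
  by rewrite coef_cons /nccoef big_nil addr0.
case: eqP => [e|_]; rewrite !coef_cons ?IH.
  by rewrite /= e mulrDl -addrA addrCA.
by rewrite addrCA.
Qed.

Lemma coef_nrm p w : nccoef (nrm p) w = nccoef p w.
Proof.
elim: p => [|m p IH] //=.
by rewrite coef_ins IH !coefE /Phi big_cons.
Qed.

Lemma check0 p : all (fun m => m.1 == 0) (nrm p) -> nceq p [::].
Proof.
move=> h w; rewrite -coef_nrm coefE /Phi /nccoef big_nil big1_seq //.
by move=> m [] /(allP h) /eqP ->; rewrite mul0r.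
Qed.

Lemma checkeq p q : all (fun m => m.1 == 0) (nrm (ncsub p q)) -> nceq p q.
Proof.
move=> /check0 h w; have := h w; rewrite /ncsub coef_add coef_scale /nccoef big_nil.
by move/eqP; rewrite mulN1r subr_eq0 => /eqP.
Qed.
End N.
Arguments nrm {A}.
Arguments ins {A}.
Arguments Phi {A}.

Lemma der_word_nceq img img' v : (forall b, nceq (img b) (img' b)) ->
  nceq (der_word img v) (der_word img' v).
Proof.
move=> e; elim: v => [|a v IH] //=.
apply: ncadd_nceq; apply: ncmul_nceq => //.
Qed.

Lemma coef_der img p w : nccoef (der img p) w = Phi (fun v => nccoef (der_word img v) w) p.
Proof.
rewrite /der coef_flatten /Phi big_map; apply: eq_bigr => m _.
by rewrite coef_scale.
Qed.

Lemma der_nceq img img' p p' : (forall b, nceq (img b) (img' b)) -> nceq p p' ->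
  nceq (der img p) (der img' p').
Proof.
move=> e1 e2 w; rewrite !coef_der (Phi_nceq _ e2); apply: eq_bigr => m _.
by rewrite (@der_word_nceq img img' m.2 e1).
Qed.

Definition imgN k := let ex := nrm (eps_x k) in let ey := nrm (eps_y k) in
  fun b : bool => if b then ex else ey.
Definition act_wordN (u : seq nat) (p : ncpoly bool) : ncpoly bool :=
  foldr (fun k q => nrm (der (imgN k) q)) p u.
Definition actN (t : tens) p := ncsum [seq ncscale m.1 (act_wordN m.2 p) | m <- t].

Lemma act_wordN_ok u p : nceq (act_word u p) (act_wordN u p).
Proof.
elim: u => [|k u IH] //= w.
rewrite coef_nrm; apply: der_nceq => // b w'.
by rewrite /imgN; case: b; rewrite coef_nrm.
Qed.

Lemma actN_ok t p : nceq (act t p) (actN t p).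
Proof.
move=> w; rewrite /act /actN !coef_flatten !big_map; apply: eq_bigr => m _.
by rewrite !coef_scale act_wordN_ok.
Qed.

Definition T0 := LAdd (LBr (LGen 5) (LGen 2)) (LScale (-3) (LBr (LGen 4) (LGen 3))).

Lemma T0_ker : lie_ker T0.
Proof.
split=> w; rewrite actN_ok; apply: check0; vm_compute; reflexivity.
Qed.

Definition L' : tens := [:: (1, [:: 5; 2]%N); (-1, [:: 2; 5]%N); (-3, [:: 4; 3]%N); (3, [:: 3; 4]%N)].

Lemma P_eq : nceq (ncmul (ncmul (ncword [::]) (lie_tens T0)) (ncword [::])) L'.
Proof. apply: checkeq; vm_compute; reflexivity. Qed.

Unset Implicit Arguments.

Theorem mainTheorem9 (f : dual) :
  in_W f -> in_iota_image f ->
  exists p q r : rat, forall w,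
    f w = p * shuffle_dual [:: E2 10] [:: E2 4] w
        + q * shuffle_dual [:: E2 8] [:: E2 6] w
        + r * (3 * dw [:: E2 10; E2 4] w + dw [:: E2 8; E2 6] w).
Proof.
move=> [a [b [c [d hf]]]] hi.
have := hi _ (ker_gen (ncword [::]) (ncword [::]) T0_ker).
rewrite /pairing -/(Phi f _) (Phi_nceq _ P_eq) /Phi !big_cons big_nil /= !hf /dw /=.
move=> h.
exists b, d, (c - d) => w.
rewrite hf /shuffle_dual /dw /=.
rewrite ![_ == w]eq_sym.
case: (eqVneq w [:: 5; 2]%N) => [->|n1] /=; first lra.
case: (eqVneq w [:: 2; 5]%N) => [->|n2] /=; first lra.
case: (eqVneq w [:: 4; 3]%N) => [->|n3] /=; first lra.
case: (eqVneq w [:: 3; 4]%N) => [_|n4] /=; first lra.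
lra.
Qed.
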